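(* Let $n\ge 1$ and $k\ge 1$ be integers, let $A=(a_{pq})$ be a real $n\times n$ matrix, and let $j\in\{1,\dots,n\}$ be such that $a_{1j}>0$. Suppose $\lambda>0$ is a simple eigenvalue of $A$ and $A\mathbf u=\lambda\mathbf u$, $\mathbf v^TA=\lambda\mathbf v^T$ for some entrywise positive vectors $\mathbf u,\mathbf v\in\mathbb R^n$. Define the real $(k+n)\times(k+n)$ matrix $B=(b_{pq})$ by $$b_{pq}=\begin{cases} 2\lambda,&\text{if }p=q\in\{1,\dots,k\};\\ -\lambda,&\text{if }(p,q)\in\{(k,k+j)\}\cup\{(1,2),(2,3),\dots,(k-1,k)\};\\ -a_{1j},&\text{if }(p,q)=(k+1,1);\\ a_{p-k,q-k},&\text{if }p,q\in\{k+1,\dots,k+n\}\text{ and }(p,q)\neq(k+1,k+j);\\ 2a_{1j},&\text{if }(p,q)=(k+1,k+j);\\ 0,&\text{otherwise}. \end{cases}$$ Then $\lambda$ is a simple eigenvalue of $B$, and $B\mathbf w=\lambda\mathbf w$, $\mathbf z^TB=\lambda\mathbf z^T$, where $w_i=u_j$ and $z_i=\frac{a_{1j}v_1}{\lambda}$ for $1\le i\le k$, and $w_i=u_{i-k}$, $z_i=v_{i-k}$ for $k+1\le i\le k+n$. Consequently, $B$ is algebraically positive.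
   Context: A real square matrix $M$ is algebraically positive if there is a real polynomial $f$ such that every entry of $f(M)$ is positive. A simple eigenvalue is one of algebraic multiplicity one. *)

(* Defs.v *)
From mathcomp Require Import all_boot all_order all_algebra.
From mathcomp Require Import reals.
Set Implicit Arguments. Unset Strict Implicit. Unset Printing Implicit Defensive.
Import Order.TTheory GRing.Theory Num.Theory.
Local Open Scope ring_scope.

Definition simple_eigenvalue (R : fieldType) (m : nat) (M : 'M[R]_m) (lam : R) : Prop :=
  mup lam (char_poly M) = 1%N.

Definition algebraically_positive (R : realFieldType) (m : nat) (M : 'M[R]_m.+1) : Prop :=
  exists f : {poly R}, forall p q, 0 < (horner_mx M f) p q.

(* The matrix B of the theorem, with 0-based indices: rows/columns 0..k-1
   (here k = k'.+1) form the first block, k..k+n-1 the second (n = n'.+1);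
   j is 0-based, so paper's a_{1j} is A ord0 j. *)
Definition Bmat (R : nzRingType) (k' n' : nat) (A : 'M[R]_n'.+1) (j : 'I_n'.+1) (lam : R)
  : 'M[R]_(k'.+1 + n'.+1) :=
  \matrix_(p, q)
    match split p, split q with
    | inl p1, inl q1 =>
        if p1 == q1 then 2 * lam
        else if (q1 : nat) == (p1 : nat).+1 then - lam else 0
    | inl p1, inr q2 => if (p1 == ord_max) && (q2 == j) then - lam else 0
    | inr p2, inl q1 => if (p2 == ord0) && (q1 == ord0) then - A ord0 j else 0
    | inr p2, inr q2 => if (p2 == ord0) && (q2 == j) then 2 * A ord0 j else A p2 q2
    end.

(* Main.v *)
Require Import Defs.
From mathcomp Require Import all_boot all_order all_algebra.
From mathcomp Require Import reals.
From mathcomp Require Import ring lra zify.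
Import Order.TTheory GRing.Theory Num.Theory.
Local Open Scope ring_scope.

Module Helpers.
Set Implicit Arguments. Unset Strict Implicit. Unset Printing Implicit Defensive.
Section GenS.
Variable F : fieldType.

Lemma char_tr n (M : 'M[F]_n) : char_poly M^T = char_poly M.
Proof.
rewrite /char_poly -det_tr; congr (\det _).
by apply/matrixP => i j; rewrite !mxE eq_sym.
Qed.

Lemma char_sim n (P M : 'M[F]_n) : P \in unitmx ->
  char_poly (invmx P *m M *m P) = char_poly M.
Proof.
move=> Pu; rewrite /char_poly /char_poly_mx.
have -> : 'X%:M - map_mx polyC (invmx P *m M *m P) =
   map_mx polyC (invmx P) *m ('X%:M - map_mx polyC M) *m map_mx polyC P.
  rewrite mulmxBr mulmxBl !map_mxM mul_mx_scalar -scalemxAl -map_mxM.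
  congr (_ - _); rewrite -map_mxM mulVmx // map_mx1 scalemx1 //.
rewrite !det_mulmx mulrC mulrA -det_mulmx -map_mxM mulmxV // map_mx1 det1 mul1r.
done.
Qed.

Lemma char_col n (N : 'M[F]_n) i lam :
  (forall k, N k i = (k == i)%:R * lam) ->
  char_poly N = ('X - lam%:P) * char_poly (row' i (col' i N)).
Proof.
move=> HN; rewrite /char_poly (expand_det_col _ i) (bigD1 i) //= big1 ?addr0.
  rewrite !mxE HN eqxx mul1r mulr1n; congr (_ * _).
  by rewrite /cofactor -signr_odd addnn odd_double expr0 mul1r row'_col'_char_poly_mx.
move=> k /negPf kn; rewrite !mxE HN kn mul0r mulr0n subr0.
by rewrite mul0r.
Qed.

Definition Pm n (x : 'cV[F]_n) i : 'M[F]_n :=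
  \matrix_(a, b) if b == i then x a 0 else (a == b)%:R.

Lemma Pm_e n (x : 'cV[F]_n) i : Pm x i *m delta_mx i 0 = x.
Proof. by rewrite -colE; apply/matrixP => a b; rewrite !mxE eqxx ord1. Qed.

Lemma Pm_unit n (x : 'cV[F]_n) i : x i 0 != 0 -> Pm x i \in unitmx.
Proof.
move=> xi; rewrite unitmxE unitfE; apply/negP => /det0P [v vn0 vP].
have vb : forall b, b != i -> v 0 b = 0.
  move=> b bi; have := congr1 (fun A : 'M[F]_(1,n) => A 0 b) vP; rewrite !mxE.
  rewrite (bigD1 b) //= big1 ?addr0; first by rewrite mxE (negPf bi) eqxx mulr1.
  by move=> c cb; rewrite mxE (negPf bi) (negPf cb) mulr0.
have vi : v 0 i = 0.
  have := congr1 (fun A : 'M[F]_(1,n) => A 0 i) vP; rewrite !mxE.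
  rewrite (bigD1 i) //= big1 ?addr0; first by rewrite mxE eqxx => /eqP; rewrite mulf_eq0 (negPf xi) orbF => /eqP.
  by move=> c ci; rewrite vb // mul0r.
apply/negP: vn0; rewrite negbK; apply/eqP/matrixP => a b; rewrite ord1 mxE.
by case: (eqVneq b i) => [->|]; [exact: vi | exact: vb].
Qed.

Definition ins n (i : 'I_n) (s : 'cV[F]_n.-1) : 'cV[F]_n :=
  \col_a (oapp (fun k => s k 0) 0 (unlift i a)).

Lemma ins_i n (i : 'I_n) s : ins i s i 0 = 0.
Proof. by rewrite mxE unlift_none. Qed.

Lemma row'_ins n (i : 'I_n) s : row' i (ins i s) = s.
Proof. by apply/matrixP => k b; rewrite !mxE liftK ord1. Qed.

Lemma row'_mul n (N : 'M[F]_n) i (s : 'cV[F]_n) : s i 0 = 0 ->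
  row' i (N *m s) = row' i (col' i N) *m row' i s.
Proof.
move=> si; apply/matrixP => k b; rewrite !mxE (bigD1_ord i) //= ord1 si mulr0 add0r.
by apply: eq_bigr => l _; rewrite !mxE.
Qed.

Lemma col_eigen_root n (A : 'M[F]_n) a (v : 'cV[F]_n) :
  A *m v = a *: v -> v != 0 -> root (char_poly A) a.
Proof.
move=> Av vn0; rewrite -char_tr -eigenvalue_root_char; apply/eigenvalueP.
exists v^T; first by rewrite -trmx_mul Av linearZ.
by rewrite trmx_eq0.
Qed.

Lemma root_col_eigen n (A : 'M[F]_n) a : root (char_poly A) a ->
  exists2 v : 'cV[F]_n, A *m v = a *: v & v != 0.
Proof.
rewrite -char_tr -eigenvalue_root_char => /eigenvalueP [v Hv vn0].
exists v^T; last by rewrite trmx_eq0.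
by rewrite -[A]trmxK -trmx_mul Hv linearZ.
Qed.

Lemma mup_fact n (M : 'M[F]_n) lam c : char_poly M = ('X - lam%:P) * c ->
  (mup lam (char_poly M) = 1)%N <-> ~~ root c lam.
Proof.
move=> Hc.
have cn0 : c != 0.
  apply: contraTneq (monic_neq0 (char_poly_monic M)) => c0.
  by rewrite Hc c0 mulr0 eqxx.
rewrite Hc mupM ?polyXsubC_eq0 // (mup_XsubCX 1) eqxx.
split => [/eqP|nr]; last by rewrite mupNroot.
move=> /eqP; rewrite add1n => -[H]; by rewrite -dvdp_XsubCl XsubC_dvd // H.
Qed.

Lemma exists_nz n (x : 'cV[F]_n) : x != 0 -> exists i, x i 0 != 0.
Proof.
move=> xn0; apply/existsP; apply: contraNT xn0; rewrite negb_exists => /forallP H.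
by apply/eqP/matrixP => a b; rewrite ord1 mxE; apply/eqP; rewrite -[_ == _]negbK H.
Qed.

Lemma geo n (M : 'M[F]_n) lam (x y : 'cV[F]_n) :
  (mup lam (char_poly M) = 1)%N -> M *m x = lam *: x -> M *m y = lam *: y ->
  x != 0 -> exists c, y = c *: x.
Proof.
move=> Hm Mx My /exists_nz [i xi].
have Pu : Pm x i \in unitmx := Pm_unit xi.
have Ne : (invmx (Pm x i) *m M *m Pm x i) *m delta_mx i (0 : 'I_1) = lam *: delta_mx i 0.
  have ex : invmx (Pm x i) *m x = delta_mx i 0 by rewrite -{2}(Pm_e x i) mulKmx.
  by rewrite -!mulmxA Pm_e Mx -scalemxAr ex.
have HN : forall k, (invmx (Pm x i) *m M *m Pm x i) k i = (k == i)%:R * lam.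
  move=> k; have := congr1 (fun A : 'cV[F]_n => A k 0) Ne; rewrite -colE !mxE => ->.
  by rewrite andbT mulrC.
have Hc := char_col HN; rewrite (char_sim M Pu) in Hc.
have nr := (mup_fact Hc).1 Hm.
set N := invmx (Pm x i) *m M *m Pm x i in Ne HN Hc nr.
set t := invmx (Pm x i) *m y.
have Nt : N *m t = lam *: t.
  by rewrite /t /N -!mulmxA (mulmxA (Pm x i)) mulmxV // mul1mx My scalemxAr.
set s := t - t i 0 *: delta_mx i (0 : 'I_1).
have Ns : N *m s = lam *: s.
  by rewrite /s mulmxBr -scalemxAr Ne Nt scalerBr scalerA scalerA mulrC.
have si : s i 0 = 0 by rewrite !mxE eqxx mulr1 subrr.
have s'0 : row' i s = 0.
  apply/eqP; apply: contraNT nr => sn0; apply: (@col_eigen_root _ _ _ (row' i s)) => //.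
  by rewrite -row'_mul // Ns; apply/matrixP => a b; rewrite !mxE.
have s0 : s = 0.
  apply/matrixP => a b; rewrite ord1 [RHS]mxE; case: (unliftP i a) => [k ->|->]; last exact: si.
  by have := congr1 (fun A : 'cV[F]_n.-1 => A k 0) s'0; rewrite !mxE.
exists (t i 0); move/eqP: s0; rewrite subr_eq0 => /eqP st.
by rewrite -(Pm_e x i) scalemxAr -st /t mulKVmx.
Qed.

Lemma simple_of n (M : 'M[F]_n) lam (w z : 'cV[F]_n) :
  M *m w = lam *: w -> z^T *m M = lam *: z^T -> (z^T *m w) 0 0 != 0 ->
  (forall y, M *m y = lam *: y -> exists c, y = c *: w) ->
  (mup lam (char_poly M) = 1)%N.
Proof.
move=> Mw zM zw Hker.
have wn0 : w != 0 by apply: contraNneq zw => ->; rewrite mulmx0 mxE.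
have [i wi] := exists_nz wn0.
have Pu : Pm w i \in unitmx := Pm_unit wi.
have ew : invmx (Pm w i) *m w = delta_mx i 0 by rewrite -{2}(Pm_e w i) mulKmx.
have Ne : (invmx (Pm w i) *m M *m Pm w i) *m delta_mx i (0 : 'I_1) = lam *: delta_mx i 0.
  by rewrite -!mulmxA Pm_e Mw -scalemxAr ew.
have HN : forall k, (invmx (Pm w i) *m M *m Pm w i) k i = (k == i)%:R * lam.
  move=> k; have := congr1 (fun A : 'cV[F]_n => A k 0) Ne; rewrite -colE !mxE => ->.
  by rewrite andbT mulrC.
have Hc := char_col HN; rewrite (char_sim M Pu) in Hc.
apply/(mup_fact Hc); apply/negP => /root_col_eigen [s' Hs' s'n0].
set N := invmx (Pm w i) *m M *m Pm w i in Ne HN Hc Hs'.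
set s := ins i s'.
set D := N *m s - lam *: s.
have HD : D = D i 0 *: delta_mx i 0.
  apply/matrixP => a b; rewrite ord1 [RHS]mxE; case: (unliftP i a) => [k ->|->]; last first.
    by rewrite [delta_mx _ _ _ _]mxE !eqxx mulr1.
  have := congr1 (fun A : 'cV[F]_n.-1 => A k 0) (row'_mul N (ins_i i s')).
  rewrite row'_ins Hs' !mxE => H.
  rewrite -/s in H; rewrite H liftK /= subrr.
  by rewrite eq_sym (negPf (neq_lift i k)) mulr0.
have zN : z^T *m Pm w i *m N = lam *: (z^T *m Pm w i).
  by rewrite /N !mulmxA -(mulmxA _ (Pm w i)) mulmxV // mulmx1 zM scalemxAl.
have zD : z^T *m Pm w i *m D = 0.
  by rewrite /D mulmxBr mulmxA zN -scalemxAl -scalemxAr subrr.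
rewrite HD -scalemxAr -mulmxA Pm_e in zD.
have Di : D i 0 = 0.
  have := congr1 (fun A : 'M[F]_1 => A 0 0) zD; rewrite [in X in X = _]mxE [RHS]mxE => /eqP.
  by rewrite mulf_eq0 (negPf zw) orbF => /eqP.
have Ns : M *m (Pm w i *m s) = lam *: (Pm w i *m s).
  have : N *m s = lam *: s by apply/eqP; rewrite -subr_eq0 -/D HD Di scale0r.
  rewrite /N -!mulmxA => /(congr1 (mulmx (Pm w i))).
  by rewrite !mulmxA mulmxV // mul1mx -mulmxA => ->; rewrite scalemxAr.
have [c Hc'] := Hker _ Ns.
have sc : s = c *: delta_mx i 0.
  by rewrite -ew scalemxAr -Hc' mulKmx.
have c0 : c = 0.
  by have := congr1 (fun A : 'cV[F]_n => A i 0) sc; rewrite ins_i !mxE eqxx mulr1.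
by apply/negP: s'n0; rewrite negbK -(row'_ins i s') -/s sc c0 scale0r; apply/eqP/matrixP => a b; rewrite !mxE.
Qed.

End GenS.

Lemma horner_eig (F : fieldType) m (M : 'M[F]_m.+1) lam (w : 'cV[F]_m.+1) p :
  M *m w = lam *: w -> horner_mx M p *m w = p.[lam] *: w.
Proof.
move=> Mw; elim/poly_ind: p => [|p c IH].
  by rewrite rmorph0 mul0mx horner0 scale0r.
rewrite rmorphD rmorphM /= horner_mx_X horner_mx_C hornerMXaddC mulmxDl.
rewrite -mulmxA Mw -scalemxAr IH mul_scalar_mx scalerA scalerDl; congr (_ + _).
by rewrite mulrC.
Qed.

Lemma alg_pos (R : realFieldType) m (M : 'M[R]_m.+1) lam (w z : 'cV[R]_m.+1) :
  (mup lam (char_poly M) = 1)%N -> M *m w = lam *: w -> z^T *m M = lam *: z^T ->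
  (forall i, 0 < w i 0) -> (forall i, 0 < z i 0) ->
  exists f : {poly R}, forall p q, 0 < horner_mx M f p q.
Proof.
move=> Hm Mw zM wp zp.
have dv : ('X - lam%:P) %| char_poly M.
  by rewrite XsubC_dvd ?monic_neq0 ?char_poly_monic // Hm.
set q := char_poly M %/ ('X - lam%:P).
have Hc : char_poly M = ('X - lam%:P) * q by rewrite mulrC divpK.
have nr := (mup_fact Hc).1 Hm.
set Q := horner_mx M q.
have CH := Cayley_Hamilton M.
have MQ : M *m Q = lam *: Q.
  apply/eqP; rewrite -subr_eq0; apply/eqP.
  move: CH; rewrite Hc rmorphM rmorphB /= horner_mx_X horner_mx_C => <-.
  by rewrite mulrBl -mul_scalar_mx.
have QM : Q *m M = lam *: Q.
  apply/eqP; rewrite -subr_eq0; apply/eqP.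
  move: CH; rewrite Hc mulrC rmorphM rmorphB /= horner_mx_X horner_mx_C => <-.
  by rewrite mulrBr -mul_mx_scalar.
have wn0 : w != 0.
  by apply/eqP => /matrixP /(_ 0 0); rewrite mxE => w0; have := wp 0; rewrite w0 ltxx.
have zn0 : z != 0.
  by apply/eqP => /matrixP /(_ 0 0); rewrite mxE => z0; have := zp 0; rewrite z0 ltxx.
have cj : forall j, exists c, col j Q = c *: w.
  move=> j; apply: (geo Hm Mw _ wn0).
  by rewrite !colE mulmxA MQ -scalemxAl.
have [d Hd] : exists d, (row 0 Q)^T = d *: z.
  apply: (@geo _ _ M^T lam z _ _ _ _ zn0); first by rewrite char_tr.
    by rewrite -[z]trmxK -trmx_mul zM linearZ /= trmxK.
  by rewrite -trmx_mul -row_mul QM; apply/matrixP => a b; rewrite !mxE.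
have HQ : forall i j, Q i j = d / w 0 0 * (w i 0 * z j 0).
  move=> i j; have [c Hcj] := cj j.
  have e1 := congr1 (fun A : 'cV[R]_m.+1 => A i 0) Hcj.
  have e2 := congr1 (fun A : 'cV[R]_m.+1 => A 0 0) Hcj.
  have e3 := congr1 (fun A : 'cV[R]_m.+1 => A j 0) Hd.
  move: e1 e2 e3; rewrite !mxE => -> e2 e3.
  have w0 : w 0 0 != 0 by rewrite gt_eqF.
  have -> : c = d * z j 0 / w 0 0 by rewrite -e3 e2 mulfK.
  rewrite mulrAC -!mulrA [z j 0 * _]mulrC; congr (_ * _); rewrite [RHS]mulrA; congr (_ * _); exact: mulrC.
have dn0 : d / w 0 0 != 0.
  apply/eqP => d0; move: nr; rewrite /root.
  have : Q *m w = q.[lam] *: w by apply: horner_eig.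
  have -> : Q = 0 by apply/matrixP => a b; rewrite HQ d0 mul0r mxE.
  rewrite mul0mx => /esym /eqP; rewrite scaler_eq0 (negPf wn0) orbF => ->.
  done.
exists ((d / w 0 0)^-1 *: q) => a b.
rewrite linearZ /= -/Q mxE HQ (mulKf dn0).
by apply: mulr_gt0.
Qed.

Lemma sum_if1 (R : nzRingType) (T : finType) (x0 : T) (P : pred T) (f : T -> R) :
  (forall x, P x -> x = x0) -> \sum_x (if P x then f x else 0) = if P x0 then f x0 else 0.
Proof.
move=> H; case: (boolP (P x0)) => Px0.
  rewrite (bigD1 x0) //= Px0 big1 ?addr0 // => x xn.
  by case: ifP => // /H xe; rewrite xe eqxx in xn.
by apply: big1 => x _; case: ifP => // Px; move: Px0; rewrite -(H _ Px) Px.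
Qed.

Section Conc.
Variables (R : nzRingType) (k' n' : nat) (A : 'M[R]_n'.+1) (j : 'I_n'.+1) (lam : R).
Local Notation k := k'.+1.
Local Notation n := n'.+1.
Local Notation B := (Bmat k' A j lam).

Lemma splitl (p : 'I_k) : split (lshift n p) = inl p.
Proof. exact: (unsplitK (inl _ p)). Qed.
Lemma splitr (p : 'I_n) : split (rshift k p) = inr p.
Proof. exact: (unsplitK (inr _ p)). Qed.

Lemma Bll p q : B (lshift n p) (lshift n q) =
  if p == q then 2 * lam else if (q : nat) == p.+1 then - lam else 0.
Proof. by rewrite mxE splitl splitl. Qed.
Lemma Blr p q : B (lshift n p) (rshift k q) =
  if (p == ord_max) && (q == j) then - lam else 0.
Proof. by rewrite mxE splitl splitr. Qed.
Lemma Brl p q : B (rshift k p) (lshift n q) =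
  if (p == ord0) && (q == ord0) then - A ord0 j else 0.
Proof. by rewrite mxE splitr splitl. Qed.
Lemma Brr p q : B (rshift k p) (rshift k q) =
  if (p == ord0) && (q == j) then 2 * A ord0 j else A p q.
Proof. by rewrite mxE splitr splitr. Qed.

Lemma BmulL (y : 'cV[R]_(k + n)) p :
  (B *m y) (lshift n p) 0 = 2 * lam * y (lshift n p) 0
    + (if ((inord p.+1 : 'I_k) : nat) == p.+1 then - lam * y (lshift n (inord p.+1)) 0 else 0)
    + (if p == ord_max then - lam * y (rshift k j) 0 else 0).
Proof.
rewrite mxE big_split_ord /=; congr (_ + _).
  rewrite (eq_bigr (fun q => (if p == q then 2 * lam * y (lshift n q) 0 else 0) +
     (if (q : nat) == p.+1 then - lam * y (lshift n q) 0 else 0))); last first.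
    move=> q _; rewrite Bll; case: eqVneq => [<-|]; last by rewrite add0r; case: ifP => //; rewrite mul0r.
    by rewrite (ltn_eqF (ltnSn p)) addr0.
  rewrite big_split /= (sum_if1 (x0 := p)); last by move=> q /eqP.
  rewrite eqxx (sum_if1 (x0 := inord p.+1)) // => q /eqP qe.
  by apply: val_inj; rewrite /= inordK // -qe.
rewrite (eq_bigr (fun q => if q == j then (if p == ord_max then - lam * y (rshift k q) 0 else 0) else 0)).
  rewrite (sum_if1 (x0 := j)); last by move=> q /eqP.
  by rewrite eqxx.
move=> q _; rewrite Blr; case: (q == j); case: (p == ord_max) => //=; by rewrite mul0r.
Qed.

Lemma BmulR (y : 'cV[R]_(k + n)) i :
  (B *m y) (rshift k i) 0 = (A *m dsubmx y) i 0
    + (if i == ord0 then A ord0 j * (y (rshift k j) 0 - y (lshift n ord0) 0) else 0).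
Proof.
rewrite mxE big_split_ord /=.
rewrite (eq_bigr (fun q => if q == ord0 then (if i == ord0 then - A ord0 j * y (lshift n q) 0 else 0) else 0)); last first.
  by move=> q _; rewrite Brl; case: (q == ord0); case: (i == ord0) => //=; rewrite mul0r.
rewrite (sum_if1 (x0 := ord0)); last by move=> q /eqP.
rewrite (eq_bigr (fun q => A i q * y (rshift k q) 0 + (if q == j then (if i == ord0 then A ord0 j * y (rshift k q) 0 else 0) else 0))); last first.
  move=> q _; rewrite Brr; case: eqVneq => [->|in0] /=; last by case: (q == j); rewrite addr0.
  case: eqVneq => [->|]; last by rewrite addr0.
  by rewrite mulr_natl mulr2n mulrDl.
rewrite big_split /= (sum_if1 (x0 := j)); last by move=> q /eqP.
rewrite eqxx [in RHS]mxE.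
have -> : \sum_q A i q * y (rshift k q) 0 = \sum_q A i q * dsubmx y q 0.
  by apply: eq_bigr => q _; rewrite mxE.
case: (i == ord0); last by rewrite add0r addr0.
rewrite addrCA mulrBr mulNr; congr (_ + _); exact: addrC.
Qed.

Lemma TmulL (y : 'cV[R]_(k + n)) q :
  (y^T *m B) 0 (lshift n q) = y (lshift n q) 0 * (2 * lam)
    + (if ((inord q.-1 : 'I_k) : nat).+1 == q then y (lshift n (inord q.-1)) 0 * - lam else 0)
    + (if q == ord0 then y (rshift k ord0) 0 * - A ord0 j else 0).
Proof.
rewrite mxE big_split_ord /=; congr (_ + _).
  rewrite (eq_bigr (fun p => (if p == q then y (lshift n p) 0 * (2 * lam) else 0) +
     (if (p : nat).+1 == q then y (lshift n p) 0 * - lam else 0))); last first.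
    move=> p _; rewrite Bll mxE; case: eqVneq => [->|pq]; first by rewrite (gtn_eqF (ltnSn q)) addr0.
    rewrite add0r eq_sym; case: ifP => //; by rewrite mulr0.
  rewrite big_split /= (sum_if1 (x0 := q)); last by move=> p /eqP.
  rewrite eqxx (sum_if1 (x0 := inord q.-1)) // => p /eqP qe.
  by apply: val_inj; rewrite /= inordK -qe //=; apply: ltn_ord.
rewrite (eq_bigr (fun p => if p == ord0 then (if q == ord0 then y (rshift k p) 0 * - A ord0 j else 0) else 0)).
  rewrite (sum_if1 (x0 := ord0)); last by move=> p /eqP.
  by rewrite eqxx.
move=> p _; rewrite Brl mxE; case: (q == ord0); case: (p == ord0) => //=; by rewrite mulr0.
Qed.

Lemma TmulR (y : 'cV[R]_(k + n)) q :
  (y^T *m B) 0 (rshift k q) = ((dsubmx y)^T *m A) 0 q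
    + (if q == j then y (rshift k ord0) 0 * A ord0 j - y (lshift n ord_max) 0 * lam else 0).
Proof.
rewrite mxE big_split_ord /=.
rewrite (eq_bigr (fun p => if p == ord_max then (if q == j then y (lshift n p) 0 * - lam else 0) else 0)); last first.
  by move=> p _; rewrite Blr mxE; case: (q == j); case: (p == ord_max) => //=; rewrite ?mulr0 ?andbF.
rewrite (sum_if1 (x0 := ord_max)); last by move=> p /eqP.
rewrite (eq_bigr (fun p => y (rshift k p) 0 * A p q + (if p == ord0 then (if q == j then y (rshift k p) 0 * A ord0 j else 0) else 0))); last first.
  move=> p _; rewrite Brr mxE; case: eqVneq => [->|pn0] /=; last by case: (q == j); rewrite addr0.
  case: eqVneq => [->|]; last by rewrite addr0.
  by rewrite mulr_natl mulr2n mulrDr.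
rewrite big_split /= (sum_if1 (x0 := ord0)); last by move=> p /eqP.
rewrite eqxx [in RHS]mxE.
have -> : \sum_p y (rshift k p) 0 * A p q = \sum_p (dsubmx y)^T 0 p * A p q.
  by apply: eq_bigr => p _; rewrite !mxE.
case: (q == j); last by rewrite add0r addr0.
rewrite addrCA mulrN; congr (_ + _); exact: addrC.
Qed.

End Conc.

Lemma inordS k' (p : 'I_k'.+1) : (((inord p.+1 : 'I_k'.+1) : nat) == p.+1) = (p != ord_max).
Proof.
case: (ltnP p k') => hp.
  rewrite inordK // eqxx; apply/esym/negP => /eqP pm.
  by rewrite pm /= ltnn in hp.
have pe : (p : nat) = k' by apply/eqP; rewrite eqn_leq hp -ltnS ltn_ord.
have -> : p = ord_max by apply: val_inj.
by rewrite eqxx /inord val_insubd /= ltnn.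
Qed.

Lemma inordP k' (q : 'I_k'.+1) : (((inord q.-1 : 'I_k'.+1) : nat).+1 == q) = (q != ord0).
Proof.
case: q => [[|q] hq] /=.
  by rewrite /inord val_insubd /=.
by rewrite inordK ?eqxx // (ltn_trans (ltnSn q) hq).
Qed.


End Helpers.
Import Helpers.

Theorem theorem2p3 (R : realType) (k' n' : nat) (A : 'M[R]_n'.+1) (j : 'I_n'.+1)
  (lam : R) (u v : 'cV[R]_n'.+1) :
  0 < A ord0 j ->
  0 < lam ->
  simple_eigenvalue A lam ->
  A *m u = lam *: u ->
  v^T *m A = lam *: v^T ->
  (forall i, 0 < u i ord0) ->
  (forall i, 0 < v i ord0) ->
  let B := Bmat k' A j lam in
  let w : 'cV[R]_(k'.+1 + n'.+1) := col_mx (const_mx (u j ord0)) u in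
  let z : 'cV[R]_(k'.+1 + n'.+1) := col_mx (const_mx (A ord0 j * v ord0 ord0 / lam)) v in
  [/\ simple_eigenvalue B lam,
      B *m w = lam *: w,
      z^T *m B = lam *: z^T
    & algebraically_positive B].
Proof.
move=> a0 lam0 Asimp Au vA up vp B w z.
have ln0 : lam != 0 by rewrite gt_eqF.
have wl : forall p, w (lshift _ p) 0 = u j 0 by move=> p; rewrite col_mxEu mxE.
have wr : forall p, w (rshift _ p) 0 = u p 0 by move=> p; rewrite col_mxEd.
have zl : forall p, z (lshift _ p) 0 = A ord0 j * v ord0 0 / lam by move=> p; rewrite col_mxEu mxE.
have zr : forall p, z (rshift _ p) 0 = v p 0 by move=> p; rewrite col_mxEd.
have Bw : B *m w = lam *: w.
  apply/matrixP => p b; rewrite ord1; case: (split_ordP p) => [p1 ->|p2 ->].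
    rewrite BmulL inordS !wl [RHS]mxE wl.
    case: (p1 == ord_max) => /=; rewrite ?addr0 ?add0r ?wr; ring.
  rewrite BmulR col_mxKd Au !wr wl [RHS]mxE wr subrr mulr0 mxE.
  by case: (p2 == ord0); rewrite addr0.
have zB : z^T *m B = lam *: z^T.
  apply/matrixP => b p; rewrite ord1; case: (split_ordP p) => [p1 ->|p2 ->].
    rewrite TmulL inordP [z (lshift _ _) 0]zl [z (lshift _ _) 0]zl zr [RHS]mxE [z^T _ _]mxE zl.
    case: (p1 == ord0) => /=; rewrite ?addr0 ?add0r; field; exact: ln0.
  rewrite TmulR col_mxKd vA [z (rshift _ _) 0]zr [z (lshift _ _) 0]zl divfK // [RHS]mxE [z^T _ _]mxE zr !mxE.
  rewrite [v ord0 0 * _]mulrC subrr.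
  by case: (p2 == j); rewrite addr0.
have un0 : u != 0.
  by apply/eqP => /matrixP /(_ 0 0); rewrite mxE => u0; have := up 0; rewrite u0 ltxx.
have ker : forall y, B *m y = lam *: y -> exists c, y = c *: w.
  move=> y By.
  have eqL : forall p, (B *m y) (lshift _ p) 0 = lam * y (lshift _ p) 0.
    by move=> p; rewrite By mxE.
  have step : forall p : 'I_k'.+1, p != ord_max ->
      y (lshift _ (inord p.+1)) 0 = y (lshift _ p) 0.
    move=> p pm; have := eqL p; rewrite BmulL inordS pm (negPf pm) addr0.
    move=> /eqP; rewrite -subr_eq0 => /eqP H.
    apply: (mulfI ln0); apply/eqP; rewrite -subr_eq0.
    rewrite -oppr_eq0; apply/eqP; rewrite -[RHS]H; ring.
  have last : y (lshift _ ord_max) 0 = y (rshift _ j) 0.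
    have := eqL ord_max; rewrite BmulL inordS eqxx /= addr0.
    move=> /eqP; rewrite -subr_eq0 => /eqP H.
    apply: (mulfI ln0); apply/eqP; rewrite -subr_eq0.
    apply/eqP; rewrite -[RHS]H; ring.
  have all1 : forall d, (d <= k')%N -> y (lshift _ (inord (k' - d))) 0 = y (rshift _ j) 0.
    elim => [|d IH] hd.
      by rewrite subn0 -last; congr (y (lshift _ _) 0); apply: val_inj; rewrite /= inordK.
    have pm : (inord (k' - d.+1) : 'I_k'.+1) != ord_max.
      rewrite -val_eqE /= inordK ?ltnS ?leq_subr //.
      by apply/eqP => h; move: hd; rewrite -h; case: (k') h => // m; rewrite subSS => h; lia.
    have e : (inord (inord (k' - d.+1) : 'I_k'.+1).+1 : 'I_k'.+1) = inord (k' - d).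
      by apply: val_inj; rewrite /= !inordK; lia.
    rewrite -(IH (ltnW hd)) -e; exact/esym/step.
  have all2 : forall p, y (lshift _ p) 0 = y (rshift _ j) 0.
    move=> p; rewrite -(all1 (k' - p)%N) ?leq_subr //; congr (y (lshift _ _) 0).
    by apply: val_inj; rewrite /= subKn ?inordK // -ltnS.
  have Ay : A *m dsubmx y = lam *: dsubmx y.
    apply/matrixP => i b; rewrite ord1.
    have := BmulR A j lam y i; rewrite By all2 subrr mulr0 [in X in X = _]mxE.
    move=> H; rewrite [RHS]mxE [dsubmx y i 0]mxE H; by case: (i == ord0); rewrite addr0.
  have [c Hc] := geo Asimp Au Ay un0.
  exists c; apply/matrixP => p b; rewrite ord1 [RHS]mxE.
  case: (split_ordP p) => [p1 ->|p2 ->].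
    rewrite all2 wl; have := congr1 (fun M : 'cV[R]_n'.+1 => M j 0) Hc.
    by rewrite !mxE.
  rewrite wr; have := congr1 (fun M : 'cV[R]_n'.+1 => M p2 0) Hc.
  by rewrite !mxE.
have wp : forall i, 0 < w i 0.
  by move=> i; case: (split_ordP i) => [p ->|p ->]; rewrite ?wl ?wr.
have zp : forall i, 0 < z i 0.
  move=> i; case: (split_ordP i) => [p ->|p ->]; rewrite ?zl ?zr //.
  by rewrite divr_gt0 // mulr_gt0.
have zwp : 0 < (z^T *m w) 0 0.
  rewrite mxE (bigD1 (rshift _ ord0)) //=.
  apply: ltr_wpDr; first by apply: sumr_ge0 => i _; rewrite mxE mulr_ge0 // ltW.
  by rewrite mxE mulr_gt0.
have zw : (z^T *m w) 0 0 != 0 by move: zwp; rewrite lt0r => /andP[].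
have Bs : simple_eigenvalue B lam by apply: (simple_of Bw zB zw ker).
split => //.
have := alg_pos Bs Bw zB wp zp.
by [].
Qed.
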